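(* In the currency market model #2 described in the context, fix $t\in\mathbb T$ and assume that for every $B\in\mathcal H_t$ with $\mathbb P(B)>0$ there exists $B'\in\mathcal F$, $B'\subset B$, with $\mathbb P(B')>0$ such that on $B'$, for all $i,j,k\le d$, $1+\lambda^{ij}_t\le(1+\lambda^{ik}_t)(1+\lambda^{kj}_t)$ and $\lambda^{ij}_t+\lambda^{ji}_t>0$. Then $N^0_t(F)=\{0\}$.
   Context: Let $T\in\mathbb N$, $\mathbb T=\{0,\dots,T\}$, $d\ge1$, $(\Omega,\mathcal F,\mathbb P)$ a complete probability space and $\mathbb H=(\mathcal H_t)_{t\in\mathbb T}$ a filtration with $\mathcal H_T\subset\mathcal F$. $\mathbb M^d$ denotes real $d\times d$ matrices, $\mathbb M^d_+$ those with nonnegative entries; $L^0(E;\mathcal G)$ denotes $E$-valued $\mathcal G$-measurable random variables; equalities between random variables hold a.s. Let $S=(S_t)_{t\in\mathbb T}$ be an $\mathcal F$-measurable $(0,\infty)^d$-valued process and $\lambda=(\lambda_t)_{t\in\mathbb T}$ an $\mathcal F$-measurable $\mathbb M^d_+$-valued process (neither necessarily $\mathbb H$-adapted); set $\tau^{ij}_t=S^j_t/S^i_t$. For $\rho,\ell\in\mathbb M^d_+$ define $f(\cdot;\rho,\ell):\mathbb M^d\to\mathbb R^d$ by $f^i(a;\rho,\ell)=\sum_{j=1}^d a^{ji}\mathbf 1_{\{a^{ji}>0\}}-a^{ij}\rho^{ij}(1+\ell^{ij})\mathbf 1_{\{a^{ij}>0\}}$, $i\le d$. Set $\mathcal A=\mathbb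 M^d_+$ and $F_t(a)=f(a;\tau_t,\lambda_t)$, $t\in\mathbb T$. Let $N_t(F)=\{F_t(\eta):\eta\in L^0(\mathbb M^d_+;\mathcal H_t)\}$ and $N^0_t(F)=N_t(F)\cap(-N_t(F))$. *)

(* Defs.v *)
From HB Require Import structures.
From mathcomp Require Import all_boot all_order all_algebra.
From mathcomp Require Import all_classical all_reals all_analysis.
Set Implicit Arguments. Unset Strict Implicit. Unset Printing Implicit Defensive.
Import Order.TTheory GRing.Theory Num.Theory.
Local Open Scope classical_set_scope.
Local Open Scope ring_scope.

Definition G_measurable_real {dT} {T : measurableType dT} {R : realType}
  (G : set (set T)) (X : T -> R) : Prop :=
  forall B : set R, measurable B -> G (X @^-1` B).

Definition L0_nonneg_mx {dT} {T : measurableType dT} {R : realType} (d : nat)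
  (G : set (set T)) (eta : T -> 'I_d -> 'I_d -> R) : Prop :=
  forall i j : 'I_d, G_measurable_real G (fun w => eta w i j) /\
                     (forall w, 0 <= eta w i j).

Definition fcost {R : realType} (d : nat) (a rho l : 'I_d -> 'I_d -> R)
  : 'I_d -> R :=
  fun i => \sum_(j < d)
     ((if 0 < a j i then a j i else 0)
      - (if 0 < a i j then a i j * rho i j * (1 + l i j) else 0)).

Definition tau {dT} {T : measurableType dT} {R : realType} (d : nat)
  (S : nat -> T -> 'I_d -> R) (t : nat) (w : T) : 'I_d -> 'I_d -> R :=
  fun i j => S t w j / S t w i.

Definition Fmap {dT} {T : measurableType dT} {R : realType} (d : nat)
  (S : nat -> T -> 'I_d -> R) (lam : nat -> T -> 'I_d -> 'I_d -> R)
  (t : nat) (eta : T -> 'I_d -> 'I_d -> R) : T -> 'I_d -> R :=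
  fun w => fcost (eta w) (tau S t w) (lam t w).

(* X \in N_t(F) (random variables identified up to P-a.s. equality) *)
Definition in_N {dT} {T : measurableType dT} {R : realType} (P : probability T R)
  (d : nat) (H : nat -> set (set T)) (S : nat -> T -> 'I_d -> R)
  (lam : nat -> T -> 'I_d -> 'I_d -> R) (t : nat) (X : T -> 'I_d -> R) : Prop :=
  exists eta, L0_nonneg_mx (H t) eta /\
    {ae P, forall w, forall i, X w i = Fmap S lam t eta w i}.

Definition in_N0 {dT} {T : measurableType dT} {R : realType} (P : probability T R)
  (d : nat) (H : nat -> set (set T)) (S : nat -> T -> 'I_d -> R)
  (lam : nat -> T -> 'I_d -> 'I_d -> R) (t : nat) (X : T -> 'I_d -> R) : Prop :=
  in_N P H S lam t X /\ in_N P H S lam t (fun w i => - X w i).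

(* Main.v *)
Require Import Defs.
From HB Require Import structures.
From mathcomp Require Import all_boot all_order all_algebra.
From mathcomp Require Import all_classical all_reals all_analysis.
From mathcomp Require Import ring lra.
Import Order.TTheory GRing.Theory Num.Theory.
Local Open Scope classical_set_scope.
Local Open Scope ring_scope.

Section K.
Variable R : realFieldType.
Variable d : nat.

Lemma sum_ident (a l : 'I_d -> 'I_d -> R) (s w : 'I_d -> R) :
  \sum_i \sum_j (w i * s i * a j i - w i * a i j * s j * (1 + l i j)) =
  \sum_i \sum_j a i j * s j * (w j - w i - w i * l i j).
Proof.
under eq_bigr do rewrite sumrB.
rewrite sumrB exchange_big /= -sumrB; apply: eq_bigr => i _.
rewrite -sumrB; apply: eq_bigr => j _; ring.
Qed.

Lemma sum0_each (f : 'I_d -> 'I_d -> R) :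
  (forall i j, 0 <= f i j) -> \sum_i \sum_j f i j = 0 -> forall i j, f i j = 0.
Proof.
move=> f0 h i j.
have := @psumr_eq0P _ _ xpredT _ (fun i _ => sumr_ge0 _ (fun j _ => f0 i j)) h i isT.
by move/(@psumr_eq0P _ _ xpredT _ (fun j _ => f0 i j)); apply.
Qed.

Lemma card_step (l : 'I_d -> 'I_d -> R) :
  (forall i j, 0 <= l i j) ->
  (forall i j k, 1 + l i j <= (1 + l i k) * (1 + l k j)) ->
  (forall i j, 0 < l i j + l j i) ->
  forall i j, l i j = 0 ->
  (#|[set k | l k i == 0%R]%SET| < #|[set k | l k j == 0%R]%SET|)%N.
Proof.
move=> l0 tri pos i j lij.
apply: proper_card; rewrite properE; apply/andP; split.
  apply/fintype.subsetP => k; rewrite !inE => /eqP lki; apply/eqP.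
  have := tri k j i; rewrite lki lij addr0 mulr1 => h.
  have := l0 k j; lra.
apply/fintype.subsetPn; exists i; rewrite !inE ?lij ?eqxx //.
have := pos i i; lra.
Qed.

Lemma key (a l : 'I_d -> 'I_d -> R) (s : 'I_d -> R) :
  (forall i j, 0 <= a i j) -> (forall i, 0 < s i) -> (forall i j, 0 <= l i j) ->
  (forall i j k, 1 + l i j <= (1 + l i k) * (1 + l k j)) ->
  (forall i j, 0 < l i j + l j i) ->
  (forall i, \sum_j (a j i - a i j * (s j / s i) * (1 + l i j)) = 0) ->
  forall i j, a i j = 0.
Proof.
move=> a0 s0 l0 tri pos E.
have E' (w : 'I_d -> R) : \sum_i \sum_j (w i * s i * a j i - w i * a i j * s j * (1 + l i j)) = 0.
  rewrite big1 // => i _.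
  transitivity (w i * s i * \sum_j (a j i - a i j * (s j / s i) * (1 + l i j))).
    rewrite mulr_sumr; apply: eq_bigr => j _.
    have := s0 i; rewrite lt0r => /andP [si _]; field; exact: si.
  by rewrite E mulr0.
have al i j : a i j * s j * l i j = 0.
  have := E' (fun _ => 1); rewrite sum_ident.
  under eq_bigr do under eq_bigr do rewrite subrr mul1r sub0r mulrN.
  move=> h; have : \sum_i \sum_j a i j * s j * l i j = 0.
    by rewrite -[LHS]opprK -[X in - X = _]sumrN; under eq_bigr do rewrite -sumrN; rewrite h oppr0.
  move/sum0_each; apply => i' j'.
  by apply: mulr_ge0; [apply: mulr_ge0 => //; apply: ltW|].
pose c (i : 'I_d) : R := (#|[set k | l k i == 0%R]%SET|)%:R.
have := E' c; rewrite sum_ident => h.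
have tge i j : 0 <= a i j * s j * (c j - c i - c i * l i j).
  have := al i j; move/eqP; rewrite !mulf_eq0 => /orP [/orP [/eqP-> | /eqP sj] | /eqP lij].
  - by rewrite !mul0r.
  - by have := s0 j; rewrite sj ltxx.
  rewrite lij mulr0 subr0; apply: mulr_ge0; first by apply: mulr_ge0 => //; apply: ltW.
  rewrite subr_ge0 /c ler_nat; apply: ltnW; exact: card_step.
move=> i j; have := sum0_each _ tge h i j.
have := al i j; move/eqP; rewrite !mulf_eq0 => /orP [/orP [/eqP-> // | /eqP sj] | /eqP lij].
  by have := s0 j; rewrite sj ltxx.
rewrite lij mulr0 subr0 => /eqP; rewrite !mulf_eq0 => /orP [/orP [/eqP-> // | /eqP sj] | ].
  by have := s0 j; rewrite sj ltxx.
rewrite subr_eq0 /c eqr_nat => /eqP hc.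
by have := card_step _ l0 tri pos _ _ lij; rewrite hc ltnn.
Qed.
End K.

Lemma posif (R : realType) (x : R) : 0 <= x -> (if 0 < x then x else 0) = x.
Proof. by move=> x0; case: ifP => // /negbT; rewrite lt0r x0 andbT negbK => /eqP->. Qed.

Lemma fcost_nn (R : realType) (d : nat) (a rho l : 'I_d -> 'I_d -> R) i :
  (forall i j, 0 <= a i j) ->
  fcost a rho l i = \sum_j (a j i - a i j * rho i j * (1 + l i j)).
Proof.
move=> a0; apply: eq_bigr => j _.
rewrite posif //; case: ifP => // /negbT; rewrite lt0r a0 andbT negbK => /eqP->.
by rewrite !mul0r.
Qed.

Lemma fcost0 (R : realType) (d : nat) (a rho l : 'I_d -> 'I_d -> R) i :
  (forall i j, a i j = 0) -> fcost a rho l i = 0.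
Proof. by move=> a0; apply: big1 => j _; rewrite !a0 ltxx subr0. Qed.

Theorem mainTheorem10 (R : realType) (dT : measure_display) (T : measurableType dT)
  (P : probability T R) (Tn d : nat) (H : nat -> set (set T))
  (S : nat -> T -> 'I_d -> R) (lam : nat -> T -> 'I_d -> 'I_d -> R) (t : nat) :
  (0 < d)%N ->
  (* complete probability space *)
  measure_is_complete P ->
  (* H is a filtration indexed by {0,...,Tn} with H_Tn contained in F *)
  (forall s, (s <= Tn)%N -> sigma_algebra setT (H s)) ->
  (forall s u, (s <= u)%N -> (u <= Tn)%N -> H s `<=` H u) ->
  H Tn `<=` measurable ->
  (* S is F-measurable, (0,oo)^d-valued; lambda is F-measurable, M^d_+-valued *)
  (forall s i, (s <= Tn)%N -> measurable_fun setT (fun w => S s w i)) ->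
  (forall s w i, (s <= Tn)%N -> 0 < S s w i) ->
  (forall s i j, (s <= Tn)%N -> measurable_fun setT (fun w => lam s w i j)) ->
  (forall s w i j, (s <= Tn)%N -> 0 <= lam s w i j) ->
  (t <= Tn)%N ->
  (forall B, H t B -> (0 < P B)%E ->
     exists B', [/\ measurable B', B' `<=` B, (0 < P B')%E &
       forall w, B' w -> forall i j k : 'I_d,
         1 + lam t w i j <= (1 + lam t w i k) * (1 + lam t w k j) /\
         0 < lam t w i j + lam t w j i]) ->
  (* N^0_t(F) = {0}, elements identified up to a.s. equality *)
  forall X : T -> 'I_d -> R,
    in_N0 P H S lam t X <-> {ae P, forall w, forall i, X w i = 0}.
Proof.
Proof.
move=> d0 compl Hsig Hmono HF Sm Spos lm lpos tle Hcond X; split.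
- move=> [[e1 [L1 ae1]] [e2 [L2 ae2]]].
  have claim i j : {ae P, forall w, e1 w i j = 0}.
    pose A := (fun w => e1 w i j) @^-1` ~` [set 0].
    have HA : H t A by apply: (L1 i j).1; apply: measurableC; apply: measurable_set1.
    have mA : measurable A by apply: HF; apply: (Hmono t Tn tle (leqnn _)).
    exists A; split; [exact: mA| |by move=> w /= h].
    apply: contrapT => PA.
    have PA' : (0 < P A)%E by rewrite lt0e measure_ge0 andbT; apply/eqP.
    have [B' [mB' B'A PB' cond]] := Hcond A HA PA'.
    have [N [mN PN sN]] := filterI ae1 ae2.
    have [w [Bw Nw]] : exists w, B' w /\ ~ N w.
      apply: contrapT => hn.
      have sub : B' `<=` N by move=> w Bw; apply: contrapT => Nw; apply: hn; exists w.
      have h : (P B' <= P N)%E := le_measure P (mem_set mB') (mem_set mN) sub.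
      by rewrite PN in h; have := lt_le_trans PB' h; rewrite ltxx.
    have [h1 h2] : (forall i, X w i = Fmap S lam t e1 w i) /\
                   (forall i, - X w i = Fmap S lam t e2 w i).
      by apply: contrapT => hn; apply: Nw; apply: sN.
    have nn1 : forall i j, 0 <= e1 w i j by move=> i' j'; apply: (L1 i' j').2.
    have nn2 : forall i j, 0 <= e2 w i j by move=> i' j'; apply: (L2 i' j').2.
    have := @key _ d (fun i j => e1 w i j + e2 w i j) (lam t w) (S t w).
    move=> /(_ _ _ _ _ _ _ i j) => K.
    have : e1 w i j + e2 w i j = 0.
      apply: K.
      - by move=> i' j'; apply: addr_ge0.
      - by move=> i'; apply: Spos.
      - by move=> i' j'; apply: lpos.
      - by move=> i' j' k; apply: (cond w Bw i' j' k).1.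
      - by move=> i' j'; apply: (cond w Bw i' j' i').2.
      move=> i'; have e := h2 i'; rewrite (h1 i') in e.
      transitivity (Fmap S lam t e1 w i' + Fmap S lam t e2 w i'); last by rewrite -e subrr.
      rewrite /Fmap (fcost_nn _ _ _ _ _ _ nn1) (fcost_nn _ _ _ _ _ _ nn2) -big_split /=.
      by apply: eq_bigr => j' _; rewrite /tau; ring.
    move=> /eqP; rewrite paddr_eq0 // => /andP [/eqP e0 _].
    by have := B'A w Bw; rewrite /A /= e0.
  have all0 : {ae P, forall w, forall i j, e1 w i j = 0}.
    apply: filter_forall => i; apply: filter_forall => j; exact: claim.
  apply: filterS2 ae1 all0 => w h1 h0 i.
  by rewrite h1 /Fmap fcost0.
- move=> aeX.
  have L0 : L0_nonneg_mx (H t) (fun (_ : T) (_ _ : 'I_d) => (0 : R)).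
    move=> i j; split => // B mB.
    have -> : (fun w : T => (0 : R)) @^-1` B = if 0 \in B then setT else set0
      := preimage_cst 0 B.
    have [h0 hC _] := Hsig t tle.
    case: ifP => _ //.
    by rewrite -(setD0 setT); apply: hC.
  split; exists (fun _ _ _ => 0); split => //; apply: filterS aeX => w h i.
  + by rewrite h /Fmap fcost0.
  + by rewrite h oppr0 /Fmap fcost0.
Qed.
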